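(* Let $d\ge 2$, $n\ge 36$, $0<\varepsilon\le\frac15$ and $0<\kappa\le\frac16\varepsilon^2$. Let $L_1,\dots,L_n\in\mathrm{GL}_d(\mathbb R)$ satisfy $\mathrm{gr}(L_i)\ge\kappa^{-1}$ for all $i\in[n]$ and $\rho(L_i,L_{i+1})\ge\varepsilon$ for all $i\in[n-1]$. Then $$e^{-11n\kappa/\varepsilon^2}\le\frac{\rho(L_1,L_2,\dots,L_n)}{\rho(L_1,L_2)\cdots\rho(L_{n-1},L_n)}\le e^{11n\kappa/\varepsilon^2}.$$
   Context: $\|\cdot\|$ is the operator norm. For $L\in\mathrm{GL}_d(\mathbb R)$ with singular values $s_1(L)\ge s_2(L)\ge\dots\ge s_d(L)>0$, the gap ratio is $\mathrm{gr}(L)=s_1(L)/s_2(L)$. For $L_1,\dots,L_m\in\mathrm{GL}_d(\mathbb R)$, $\rho(L_1,\dots,L_m)=\frac{\|L_m\cdots L_2L_1\|}{\|L_m\|\cdots\|L_1\|}$. *)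

(* Defs.v *)
(* classical reals (exp needed). d x d real matrices are
   represented as functions nat -> nat -> R, only entries with indices < d
   being meaningful; vectors in R^d as nat -> R. *)
From Stdlib Require Import Reals Lra ClassicalEpsilon.
Open Scope R_scope.

Fixpoint sumR (n : nat) (f : nat -> R) : R :=
  match n with O => 0 | S k => sumR k f + f k end.

Fixpoint prodR (n : nat) (f : nat -> R) : R :=
  match n with O => 1 | S k => prodR k f * f k end.

Definition Mat := nat -> nat -> R.
Definition Vec := nat -> R.

Definition idM : Mat := fun i j => if Nat.eqb i j then 1 else 0.
Definition mulM (d : nat) (A B : Mat) : Mat :=
  fun i j => sumR d (fun k => A i k * B k j).
Definition applyM (d : nat) (A : Mat) (x : Vec) : Vec :=
  fun i => sumR d (fun j => A i j * x j).

Definition vnorm (d : nat) (x : Vec) : R := sqrt (sumR d (fun i => x i ^ 2)).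

Definition opnorm (d : nat) (A : Mat) : R :=
  epsilon (inhabits 0)
    (is_lub (fun r => exists x : Vec, vnorm d x = 1 /\ r = vnorm d (applyM d A x))).

Definition invertible (d : nat) (A : Mat) : Prop :=
  exists B : Mat, forall i j, (i < d)%nat -> (j < d)%nat ->
    mulM d B A i j = idM i j /\ mulM d A B i j = idM i j.

Definition orthogonal (d : nat) (U : Mat) : Prop :=
  forall i j, (i < d)%nat -> (j < d)%nat ->
    sumR d (fun k => U k i * U k j) = idM i j.

Definition is_svd (d : nat) (A U : Mat) (s : nat -> R) (V : Mat) : Prop :=
  orthogonal d U /\ orthogonal d V /\
  (forall k, (k < d)%nat -> 0 <= s k) /\
  (forall k, (S k < d)%nat -> s (S k) <= s k) /\
  (forall i j, (i < d)%nat -> (j < d)%nat ->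
     A i j = sumR d (fun k => U i k * s k * V j k)).

(* singular values s_1(A) >= ... >= s_d(A), stored 0-indexed: sing_vals d A 0 = s_1(A) *)
Definition sing_vals (d : nat) (A : Mat) : nat -> R :=
  epsilon (inhabits (fun _ => 0))
    (fun s => exists U V, is_svd d A U s V).

Definition gr (d : nat) (A : Mat) : R := sing_vals d A 0 / sing_vals d A 1.

(* L_m ... L_2 L_1 for a family L indexed from 1 *)
Fixpoint prodM (d : nat) (L : nat -> Mat) (m : nat) : Mat :=
  match m with O => idM | S k => mulM d (L (S k)) (prodM d L k) end.

Definition rho (d : nat) (L : nat -> Mat) (m : nat) : R :=
  opnorm d (prodM d L m) / prodR m (fun k => opnorm d (L (S k))).

Definition rho2 (d : nat) (A B : Mat) : R :=
  opnorm d (mulM d B A) / (opnorm d B * opnorm d A).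

(* Main.v *)
Require Import Defs.
From Stdlib Require Import Reals Lra Lia Psatz ClassicalEpsilon Classical FunctionalExtensionality.
From Stdlib Require Morphisms Setoid.
Open Scope R_scope.

#[export] Instance sumR_proper n : Morphisms.Proper (Morphisms.respectful (Morphisms.pointwise_relation nat eq) eq) (sumR n).
Proof. intros f g H; induction n; simpl; [reflexivity| rewrite IHn, H; reflexivity]. Qed.

Lemma sumR_ext n f g : (forall k, (k < n)%nat -> f k = g k) -> sumR n f = sumR n g.
Proof. induction n; intros H; simpl; [reflexivity|]. rewrite IHn by (intros; apply H; lia). rewrite H by lia; reflexivity. Qed.

Lemma sumR_plus n f g : sumR n (fun k => f k + g k) = sumR n f + sumR n g.
Proof. induction n; simpl; [ring| rewrite IHn; ring]. Qed.

Lemma sumR_minus n f g : sumR n (fun k => f k - g k) = sumR n f - sumR n g.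
Proof. induction n; simpl; [ring| rewrite IHn; ring]. Qed.

Lemma sumR_opp n f : sumR n (fun k => - f k) = - sumR n f.
Proof. induction n; simpl; [ring| rewrite IHn; ring]. Qed.

Lemma sumR_scal_l n c f : sumR n (fun k => c * f k) = c * sumR n f.
Proof. induction n; simpl; [ring| rewrite IHn; ring]. Qed.

Lemma sumR_scal_r n c f : sumR n (fun k => f k * c) = sumR n f * c.
Proof. induction n; simpl; [ring| rewrite IHn; ring]. Qed.

Lemma sumR_zero n : sumR n (fun _ => 0) = 0.
Proof. induction n; simpl; [ring| rewrite IHn; ring]. Qed.

Lemma sumR_swap n m (f : nat -> nat -> R) :
  sumR n (fun i => sumR m (fun j => f i j)) = sumR m (fun j => sumR n (fun i => f i j)).
Proof.
  induction n; simpl.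
  - now rewrite sumR_zero.
  - rewrite IHn, <- sumR_plus. reflexivity.
Qed.

Lemma sumR_S_l n f : sumR (S n) f = f O + sumR n (fun k => f (S k)).
Proof. induction n; simpl in *; [ring| rewrite IHn; ring]. Qed.

Lemma idM_sym i j : idM i j = idM j i.
Proof. unfold idM. rewrite PeanoNat.Nat.eqb_sym. reflexivity. Qed.

Lemma idM_eq i : idM i i = 1.
Proof. unfold idM. rewrite PeanoNat.Nat.eqb_refl. reflexivity. Qed.

Lemma idM_neq i j : i <> j -> idM i j = 0.
Proof. intros H. unfold idM. destruct (PeanoNat.Nat.eqb_spec i j); [congruence|reflexivity]. Qed.

Lemma sumR_delta_r n f k : (k < n)%nat -> sumR n (fun j => f j * idM j k) = f k.
Proof.
  induction n; intros Hk; simpl; [lia|].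
  destruct (PeanoNat.Nat.eq_dec k n) as [->|Hne].
  - rewrite idM_eq. rewrite sumR_ext with (g := fun _ => 0). rewrite sumR_zero; ring.
    intros j Hj. rewrite idM_neq by lia. ring.
  - rewrite IHn by lia. rewrite idM_neq by lia. ring.
Qed.

Lemma sumR_delta_l n f k : (k < n)%nat -> sumR n (fun j => idM k j * f j) = f k.
Proof.
  intros Hk. rewrite <- (sumR_delta_r n f k Hk). apply sumR_ext. intros j _. rewrite idM_sym. ring.
Qed.

Lemma sumR_le n f g : (forall k, (k < n)%nat -> f k <= g k) -> sumR n f <= sumR n g.
Proof. induction n; intros H; simpl; [lra|]. assert (H1 := H n ltac:(lia)). assert (sumR n f <= sumR n g) by (apply IHn; intros; apply H; lia). lra. Qed.

Lemma sumR_nonneg n f : (forall k, (k < n)%nat -> 0 <= f k) -> 0 <= sumR n f.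
Proof. intros H. rewrite <- (sumR_zero n). apply sumR_le. auto. Qed.

Lemma sumR_term_le n f k : (forall j, (j < n)%nat -> 0 <= f j) -> (k < n)%nat -> f k <= sumR n f.
Proof.
  induction n; intros H Hk; simpl; [lia|].
  assert (0 <= sumR n f) by (apply sumR_nonneg; intros; apply H; lia).
  destruct (PeanoNat.Nat.eq_dec k n) as [->|Hne]; [lra|].
  assert (f k <= sumR n f) by (apply IHn; [intros; apply H; lia| lia]).
  assert (0 <= f n) by (apply H; lia). lra.
Qed.

Lemma sumR_sq_zero n x : sumR n (fun i => x i ^ 2) = 0 -> forall i, (i < n)%nat -> x i = 0.
Proof.
  intros H i Hi. assert (x i ^ 2 <= 0).
  { rewrite <- H. apply (sumR_term_le n (fun i => x i ^ 2)); auto. intros; nra. }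
  nra.
Qed.

Definition ip d (x y : Vec) := sumR d (fun i => x i * y i).
Definition nsq d (x : Vec) := sumR d (fun i => x i ^ 2).

Lemma nsq_ip d x : nsq d x = ip d x x.
Proof. unfold nsq, ip. apply sumR_ext; intros; ring. Qed.

Lemma nsq_nonneg d x : 0 <= nsq d x.
Proof. apply sumR_nonneg; intros; nra. Qed.

Lemma sq_sum n f : (sumR n f)^2 = sumR n (fun k => sumR n (fun l => f k * f l)).
Proof.
  transitivity (sumR n (fun k => f k * sumR n f)).
  - rewrite sumR_scal_r. ring.
  - apply sumR_ext; intros k _. rewrite sumR_scal_l. reflexivity.
Qed.

Lemma orth_iso d W w : orthogonal d W ->
  sumR d (fun i => (sumR d (fun k => W i k * w k))^2) = sumR d (fun k => w k ^ 2).
Proof.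
  intros HW.
  setoid_rewrite sq_sum.
  transitivity (sumR d (fun k => sumR d (fun l => w k * w l * sumR d (fun i => W i k * W i l)))).
  - rewrite sumR_swap. apply sumR_ext; intros k _. rewrite sumR_swap.
    apply sumR_ext; intros l _. rewrite <- sumR_scal_l. apply sumR_ext; intros; ring.
  - apply sumR_ext; intros k Hk.
    transitivity (sumR d (fun l => (w k * w l) * idM l k)).
    + apply sumR_ext; intros l Hl. rewrite (HW k l Hk Hl), idM_sym. reflexivity.
    + rewrite (sumR_delta_r d (fun l => w k * w l) k Hk). ring.
Qed.

Lemma cs_unit d v x : nsq d v = 1 -> (ip d v x)^2 <= nsq d x.
Proof.
  intros Hv. set (c := ip d v x).
  assert (H0 : 0 <= nsq d (fun i => x i - c * v i)) by apply nsq_nonneg.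
  unfold nsq in H0.
  assert (E : sumR d (fun i => (x i - c * v i) ^ 2) = nsq d x - 2 * c * ip d v x + c^2 * nsq d v).
  { unfold nsq, ip. rewrite <- sumR_scal_l, <- sumR_scal_l, <- sumR_minus, <- sumR_plus.
    apply sumR_ext; intros; ring. }
  rewrite E, Hv in H0. fold c in H0. nra.
Qed.

Lemma sqrt_sq_le a b : 0 <= b -> a ^ 2 <= b ^ 2 -> a <= b.
Proof. intros; nra. Qed.

Lemma abs_ip_unit d v x : nsq d v = 1 -> Rabs (ip d v x) <= sqrt (nsq d x).
Proof.
  intros Hv. apply sqrt_sq_le. apply sqrt_pos.
  rewrite <- Rsqr_pow2, <- Rsqr_abs, Rsqr_pow2. rewrite pow2_sqrt by apply nsq_nonneg.
  now apply cs_unit.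
Qed.

Lemma applyM_mulM d X Y z i :
  applyM d (mulM d X Y) z i = applyM d X (applyM d Y z) i.
Proof.
  unfold applyM, mulM.
  setoid_rewrite <- sumR_scal_l. setoid_rewrite <- sumR_scal_r.
  rewrite sumR_swap. apply sumR_ext; intros; apply sumR_ext; intros; ring.
Qed.

Lemma orthogonal_mulM d X Y : orthogonal d X -> orthogonal d Y -> orthogonal d (mulM d X Y).
Proof.
  intros HX HY i j Hi Hj. unfold mulM.
  transitivity (sumR d (fun l => sumR d (fun m => Y l i * Y m j * sumR d (fun k => X k l * X k m)))).
  - setoid_rewrite <- sumR_scal_r. setoid_rewrite <- sumR_scal_l.
    rewrite sumR_swap. apply sumR_ext; intros l _. rewrite sumR_swap.
    apply sumR_ext; intros m _. apply sumR_ext; intros; ring.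
  - transitivity (sumR d (fun l => sumR d (fun m => (Y l i * Y m j) * idM m l))).
    + apply sumR_ext; intros l Hl; apply sumR_ext; intros m Hm. rewrite (HX l m Hl Hm), idM_sym. reflexivity.
    + transitivity (sumR d (fun l => Y l i * Y l j)).
      * apply sumR_ext; intros l Hl. apply (sumR_delta_r d (fun m => Y l i * Y m j) l Hl).
      * apply HY; auto.
Qed.

Definition symM (H : Mat) := forall i j, H i j = H j i.

Lemma symorth_rows d H : symM H -> orthogonal d H ->
  forall i k, (i < d)%nat -> (k < d)%nat -> sumR d (fun p => H i p * H k p) = idM i k.
Proof.
  intros Hs Ho i k Hi Hk. rewrite <- (Ho i k Hi Hk). apply sumR_ext; intros. rewrite (Hs i), (Hs k). reflexivity.
Qed.

Lemma nsq_applyM_orth d W z : orthogonal d W -> nsq d (applyM d W z) = nsq d z.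
Proof. intros HW. unfold nsq, applyM. apply orth_iso; auto. Qed.

Definition trM (A : Mat) : Mat := fun i j => A j i.

Lemma orthogonal_tr_sym d H : symM H -> orthogonal d H -> orthogonal d (trM H).
Proof. intros Hs Ho i j Hi Hj. unfold trM. rewrite <- (Ho i j Hi Hj). apply sumR_ext; intros. rewrite (Hs i), (Hs j). reflexivity. Qed.

Lemma householder D v : (1 <= D)%nat -> nsq D v = 1 ->
  exists H, symM H /\ orthogonal D H /\ forall i, (i < D)%nat -> H i O = v i.
Proof.
  intros HD Hv.
  set (w := fun i => idM i O - v i).
  assert (Hnw : nsq D w = 2 - 2 * v O).
  { unfold nsq, w.
    transitivity (sumR D (fun i => idM O i * idM i O) - 2 * sumR D (fun i => idM O i * v i) + nsq D v).
    - unfold nsq. rewrite <- sumR_scal_l, <- sumR_minus, <- sumR_plus. apply sumR_ext; intros. rewrite (idM_sym O). ring.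
    - rewrite Hv, (sumR_delta_l D (fun i => idM i O) O) by lia.
      rewrite (sumR_delta_l D v O) by lia. rewrite idM_eq. ring. }
  destruct (Req_dec (nsq D w) 0) as [H0|H0].
  - exists idM. split; [intros i j; apply idM_sym|]. split.
    + intros i j Hi Hj. rewrite (sumR_delta_r D (fun k => idM k i) j Hj). apply idM_sym.
    + intros i Hi. assert (Hw := sumR_sq_zero D w H0 i Hi). unfold w in Hw. lra.
  - set (nw := nsq D w) in *.
    exists (fun i j => idM i j - 2 * w i * w j / nw). split; [|split].
    + intros i j. rewrite idM_sym. field. exact H0.
    + intros i j Hi Hj.
      transitivity (sumR D (fun k => idM k i * idM k j) - (2 * w j / nw) * sumR D (fun k => idM i k * w k)
         - (2 * w i / nw) * sumR D (fun k => idM j k * w k) + (4 * w i * w j / nw ^ 2) * sumR D (fun k => w k ^ 2)).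
      * rewrite <- !sumR_scal_l, <- !sumR_minus, <- sumR_plus. apply sumR_ext; intros k Hk.
        rewrite (idM_sym k i), (idM_sym k j). field. exact H0.
      * rewrite (sumR_delta_l D w i Hi), (sumR_delta_l D w j Hj).
        rewrite (sumR_delta_r D (fun k => idM k i) j Hj). fold (nsq D w). fold nw. rewrite (idM_sym j i). field. exact H0.
    + intros i Hi. assert (Hw0 : w O = 1 - v O) by (unfold w; rewrite idM_eq; ring).
      rewrite Hw0. fold nw in Hnw. rewrite Hnw.
      assert (1 - v O <> 0) by (intro; apply H0; rewrite Hnw; lra).
      unfold w. field. lra.
Qed.

Definition ext1 (M : Mat) : Mat := fun i j =>
  match i, j with O, O => 1 | O, S _ => 0 | S _, O => 0 | S i', S j' => M i' j' end.

Lemma orthogonal_ext1 d M : orthogonal d M -> orthogonal (S d) (ext1 M).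
Proof.
  intros HM i j Hi Hj. rewrite sumR_S_l.
  destruct i as [|i]; destruct j as [|j]; simpl.
  - rewrite sumR_ext with (g := fun _ => 0) by (intros; simpl; ring). rewrite sumR_zero. rewrite idM_eq. ring.
  - rewrite sumR_ext with (g := fun _ => 0) by (intros; ring). rewrite sumR_zero. unfold idM; simpl. ring.
  - rewrite sumR_ext with (g := fun _ => 0) by (intros; ring). rewrite sumR_zero. unfold idM; simpl. ring.
  - rewrite (HM i j) by lia. unfold idM; simpl. ring.
Qed.

Definition Qf d A x := nsq d (applyM d A x).

Lemma applyM_lin d A (x y : Vec) a b i :
  applyM d A (fun j => a * x j + b * y j) i = a * applyM d A x i + b * applyM d A y i.
Proof. unfold applyM. rewrite <- !sumR_scal_l, <- sumR_plus. apply sumR_ext; intros; ring. Qed.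

Lemma nsq_comb d (x y : Vec) a b :
  nsq d (fun i => a * x i + b * y i) = a^2 * nsq d x + 2 * a * b * ip d x y + b^2 * nsq d y.
Proof. unfold nsq, ip. rewrite <- !sumR_scal_l, <- !sumR_plus. apply sumR_ext; intros; ring. Qed.

Lemma nsq_ext d x y : (forall i, (i < d)%nat -> x i = y i) -> nsq d x = nsq d y.
Proof. intros H; unfold nsq; apply sumR_ext; intros; rewrite H; auto. Qed.

Lemma nsq_scal d x a : nsq d (fun i => a * x i) = a^2 * nsq d x.
Proof. unfold nsq. rewrite <- sumR_scal_l. apply sumR_ext; intros; ring. Qed.

Lemma applyM_scal d A x a i : applyM d A (fun j => a * x j) i = a * applyM d A x i.
Proof. unfold applyM. rewrite <- sumR_scal_l. apply sumR_ext; intros; ring. Qed.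

Lemma Q_scal d A x a : Qf d A (fun j => a * x j) = a^2 * Qf d A x.
Proof. unfold Qf. rewrite <- nsq_scal. apply nsq_ext; intros; apply applyM_scal. Qed.

Lemma applyM_zero d A x : (forall j, (j < d)%nat -> x j = 0) -> forall i, applyM d A x i = 0.
Proof. intros H i. unfold applyM. rewrite sumR_ext with (g := fun _ => 0). apply sumR_zero. intros; rewrite H; auto; ring. Qed.

Lemma Q_nonneg d A x : 0 <= Qf d A x.
Proof. apply nsq_nonneg. Qed.

Lemma unit_e0 D : (1 <= D)%nat -> nsq D (fun i => idM i O) = 1.
Proof. intros HD. unfold nsq. transitivity (sumR D (fun i => idM i O * idM i O)); [apply sumR_ext; intros; ring|].
  rewrite (sumR_delta_r D (fun i => idM i O) O) by lia. apply idM_eq. Qed.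

Lemma Q_bound_all D A M :
  (forall x, nsq D x <= 1 -> Qf D A x <= M) -> forall x, Qf D A x <= M * nsq D x.
Proof.
  intros HM x.
  destruct (Req_dec (nsq D x) 0) as [H0|H0].
  - assert (HQ : Qf D A x = 0).
    { unfold Qf, nsq. rewrite sumR_ext with (g := fun _ => 0). apply sumR_zero.
      intros i Hi. rewrite applyM_zero. ring. apply sumR_sq_zero; auto. }
    rewrite HQ, H0. lra.
  - assert (Hp : 0 < nsq D x) by (pose proof (nsq_nonneg D x); lra).
    set (r := sqrt (nsq D x)).
    assert (Hr : 0 < r) by (apply sqrt_lt_R0; auto).
    assert (Hr2 : r ^ 2 = nsq D x) by (unfold r; rewrite pow2_sqrt; lra).
    assert (H1 : Qf D A (fun j => / r * x j) <= M).
    { apply HM. rewrite nsq_scal. rewrite <- Hr2. field_simplify; lra. }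
    rewrite Q_scal in H1. rewrite <- Hr2.
    assert (Qf D A x = r^2 * ((/ r)^2 * Qf D A x)) by (field; lra). nra.
Qed.

Lemma top_pair D A : (1 <= D)%nat ->
  (exists c, nsq D c <= 1 /\ forall x, nsq D x <= 1 -> Qf D A x <= Qf D A c) ->
  exists v u s, nsq D v = 1 /\ nsq D u = 1 /\ 0 <= s /\
    (forall i, (i < D)%nat -> applyM D A v i = s * u i) /\
    (forall x, Qf D A x <= s^2 * nsq D x) /\
    (forall y, ip D v y = 0 -> ip D u (applyM D A y) = 0).
Proof.
  intros HD [c [Hc Hmax]].
  assert (Hall := Q_bound_all D A (Qf D A c) Hmax).
  assert (Hv : exists v, nsq D v = 1 /\ forall x, Qf D A x <= Qf D A v * nsq D x).
  { destruct (Req_dec (nsq D c) 0) as [H0|H0].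
    - exists (fun i => idM i O). split; [apply unit_e0; auto|].
      assert (HQc : Qf D A c = 0).
      { unfold Qf. unfold nsq. rewrite sumR_ext with (g := fun _ => 0). apply sumR_zero.
        intros i Hi. rewrite applyM_zero. ring. apply sumR_sq_zero; auto. }
      assert (HQe : Qf D A (fun i => idM i O) = 0).
      { pose proof (Hall (fun i => idM i O)). rewrite HQc in H. pose proof (Q_nonneg D A (fun i => idM i O)). nra. }
      intros x. rewrite HQe. pose proof (Hall x). rewrite HQc in H. lra.
    - assert (Hp : 0 < nsq D c) by (pose proof (nsq_nonneg D c); lra).
      set (r := sqrt (nsq D c)).
      assert (Hr : 0 < r) by (apply sqrt_lt_R0; auto).
      assert (Hr2 : r ^ 2 = nsq D c) by (unfold r; rewrite pow2_sqrt; lra).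
      exists (fun j => / r * c j). split.
      + rewrite nsq_scal, <- Hr2. field; lra.
      + intros x. rewrite Q_scal.
        assert (Qf D A c <= (/ r)^2 * Qf D A c).
        { assert (r^2 <= 1) by lra. pose proof (Q_nonneg D A c).
          assert (1 <= (/r)^2). { rewrite <- Rinv_pow by lra. rewrite <- Rinv_1. apply Rinv_le_contravar; lra. }
          nra. }
        pose proof (Hall x). pose proof (nsq_nonneg D x). nra. }
  destruct Hv as [v [Hv1 Hvmax]].
  set (s := sqrt (Qf D A v)).
  assert (Hs0 : 0 <= s) by apply sqrt_pos.
  assert (Hs2 : s ^ 2 = Qf D A v) by (unfold s; rewrite pow2_sqrt; auto; apply Q_nonneg).
  destruct (Req_dec s 0) as [Hs|Hs].
  - exists v, (fun i => idM i O), s. split; auto. split; [apply unit_e0; auto|]. split; auto.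
    assert (HQv : Qf D A v = 0) by (rewrite <- Hs2, Hs; ring).
    split; [|split].
    + intros i Hi. rewrite Hs. rewrite Rmult_0_l. apply (sumR_sq_zero D (applyM D A v)); auto.
    + intros x. rewrite Hs2. auto.
    + intros y _. unfold ip. rewrite sumR_ext with (g := fun _ => 0). apply sumR_zero.
      intros i Hi. assert (Qf D A y = 0).
      { pose proof (Hvmax y). rewrite HQv in H. pose proof (Q_nonneg D A y). nra. }
      rewrite (sumR_sq_zero D (applyM D A y) H i Hi). ring.
  - assert (Hsp : 0 < s) by lra.
    exists v, (fun i => / s * applyM D A v i), s. split; auto. split.
    { rewrite nsq_scal. fold (Qf D A v). rewrite <- Hs2. field; lra. }
    split; auto. split; [|split].
    + intros i Hi. field. lra.
    + intros x. rewrite Hs2. auto.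
    + intros y Hy.
      set (b := ip D (applyM D A v) (applyM D A y)).
      assert (Hb : b = 0).
      { set (K := s^2 * nsq D y - Qf D A y).
        assert (HK : 0 <= K) by (unfold K; rewrite Hs2; pose proof (Hvmax y); lra).
        assert (Ht : forall t, 2 * t * b <= t^2 * K).
        { intros t. pose proof (Hvmax (fun i => 1 * v i + t * y i)) as H.
          rewrite nsq_comb, Hv1, Hy in H.
          unfold Qf in H. rewrite (nsq_ext D _ (fun i => 1 * applyM D A v i + t * applyM D A y i)) in H
            by (intros; apply applyM_lin).
          rewrite nsq_comb in H. fold (Qf D A v) (Qf D A y) b in H.
          unfold K. rewrite Hs2. nra. }
        pose proof (Ht (b / (K + 1))) as H.
        assert (Hk1 : 0 < K + 1) by lra.
        assert (H2 : 2 * b^2 * (K+1) <= b^2 * K).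
        { replace (2 * (b / (K + 1)) * b) with (2 * b^2 / (K+1)) in H by (field; lra).
          replace ((b / (K + 1))^2 * K) with (b^2 * K / (K+1)^2) in H by (field; lra).
          apply Rmult_le_compat_r with (r := (K+1)^2) in H; [|nra].
          replace (2 * b ^ 2 / (K + 1) * (K + 1) ^ 2) with (2 * b^2 * (K+1)) in H by (field; lra).
          replace (b ^ 2 * K / (K + 1) ^ 2 * (K + 1) ^ 2) with (b^2 * K) in H by (field; lra).
          exact H. }
        nra. }
      unfold ip. rewrite sumR_ext with (g := fun i => / s * (applyM D A v i * applyM D A y i)) by (intros; ring).
      rewrite sumR_scal_l. fold (ip D (applyM D A v) (applyM D A y)). fold b. rewrite Hb. ring.
Qed.

Lemma contract_l d H X i : symM H -> orthogonal d H -> (i < d)%nat ->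
  sumR d (fun p => H i p * sumR d (fun k => H k p * X k)) = X i.
Proof.
  intros Hs Ho Hi.
  transitivity (sumR d (fun k => X k * sumR d (fun p => H i p * H k p))).
  - setoid_rewrite <- sumR_scal_l. rewrite sumR_swap. apply sumR_ext; intros; apply sumR_ext; intros; ring.
  - transitivity (sumR d (fun k => X k * idM k i)).
    + apply sumR_ext; intros k Hk. rewrite (symorth_rows d H Hs Ho i k Hi Hk), idM_sym. reflexivity.
    + apply sumR_delta_r; auto.
Qed.

Lemma contract_r d H X j : symM H -> orthogonal d H -> (j < d)%nat ->
  sumR d (fun q => sumR d (fun l => X l * H l q) * H j q) = X j.
Proof.
  intros Hs Ho Hj. rewrite <- (contract_l d H X j Hs Ho Hj).
  apply sumR_ext; intros q _. rewrite Rmult_comm. f_equal. apply sumR_ext; intros; ring.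
Qed.

Section SVD.
Variable ballmax : forall d A, exists c, nsq d c <= 1 /\ forall x, nsq d x <= 1 -> Qf d A x <= Qf d A c.

Theorem svd_exists : forall d A, exists U s V, is_svd d A U s V.
Proof.
  induction d as [|d IH]; intros A.
  { exists idM, (fun _ => 0), idM. split; [intros i j Hi; lia|]. split; [intros i j Hi; lia|]. split; [intros; lra|]. split; intros; lia. }
  set (D := S d).
  destruct (top_pair D A ltac:(unfold D; lia) (ballmax D A)) as [v [u [sg [Hv [Hu [Hsg [HAv [HQ Hperp]]]]]]]].
  destruct (householder D v ltac:(unfold D; lia) Hv) as [Hv' [Hvs [Hvo Hv0]]].
  destruct (householder D u ltac:(unfold D; lia) Hu) as [Hu' [Hus [Huo Hu0]]].
  set (B := mulM D (mulM D (trM Hu') A) Hv').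
  assert (F1 : forall i, (i < D)%nat -> B i O = sg * idM i O).
  { intros i Hi. unfold B.
    transitivity (sumR D (fun k => Hu' k i * applyM D A v k)).
    - unfold mulM, trM, applyM. setoid_rewrite <- sumR_scal_r. rewrite sumR_swap.
      apply sumR_ext; intros k Hk. rewrite <- sumR_scal_l. apply sumR_ext; intros l Hl. rewrite Hv0 by auto. ring.
    - transitivity (sg * sumR D (fun k => Hu' k i * Hu' k O)).
      + rewrite <- sumR_scal_l. apply sumR_ext; intros k Hk. rewrite HAv, Hu0 by auto. ring.
      + rewrite Huo by (unfold D in *; lia). reflexivity. }
  assert (F2 : forall j, (0 < j < D)%nat -> B O j = 0).
  { intros j Hj. unfold B.
    transitivity (ip D u (applyM D A (fun l => Hv' l j))).
    - unfold mulM, trM, applyM, ip. setoid_rewrite <- sumR_scal_r. rewrite sumR_swap.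
      apply sumR_ext; intros k Hk. rewrite <- sumR_scal_l. apply sumR_ext; intros l Hl. rewrite Hu0 by auto. ring.
    - apply Hperp. unfold ip. transitivity (sumR D (fun l => Hv' l O * Hv' l j)).
      + apply sumR_ext; intros. rewrite Hv0; auto.
      + rewrite Hvo by lia. apply idM_neq. lia. }
  set (B' := fun i j => B (S i) (S j)).
  assert (F3 : forall y, nsq d (applyM d B' y) <= sg^2 * nsq d y).
  { intros y. set (yt := fun j => match j with O => 0 | S j' => y j' end).
    assert (E1 : forall i, applyM D B yt (S i) = applyM d B' y i).
    { intros i. unfold applyM, D. rewrite sumR_S_l. simpl. ring_simplify. reflexivity. }
    assert (E2 : nsq d (applyM d B' y) <= nsq D (applyM D B yt)).
    { unfold D. unfold nsq at 2. rewrite sumR_S_l. unfold nsq.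
      rewrite (sumR_ext d (fun k => applyM (S d) B yt (S k) ^ 2) (fun i => applyM d B' y i ^ 2)) by (intros; rewrite E1; reflexivity).
      pose proof (pow2_ge_0 (applyM (S d) B yt O)). lra. }
    assert (E3 : nsq D (applyM D B yt) = Qf D A (applyM D Hv' yt)).
    { unfold Qf. rewrite <- (nsq_applyM_orth D (trM Hu') (applyM D A (applyM D Hv' yt))).
      - apply nsq_ext; intros i Hi. unfold B. rewrite applyM_mulM. rewrite applyM_mulM.
        reflexivity.
      - apply orthogonal_tr_sym; auto. }
    assert (E4 : nsq D (applyM D Hv' yt) = nsq d y).
    { rewrite nsq_applyM_orth by auto. unfold D, nsq. rewrite sumR_S_l. simpl. ring. }
    pose proof (HQ (applyM D Hv' yt)). rewrite E4 in H. lra. }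
  destruct (IH B') as [U' [s' [V' [HU' [HV' [Hs'0 [Hs'm HB']]]]]]].
  assert (F4 : (1 <= d)%nat -> s' O <= sg).
  { intros Hd. set (y := fun j => V' j O).
    assert (Ey : nsq d y = 1).
    { unfold y, nsq. transitivity (idM O O); [|apply idM_eq]. rewrite <- (HV' O O) by lia. apply sumR_ext; intros; ring. }
    assert (EB : forall i, (i < d)%nat -> applyM d B' y i = s' O * U' i O).
    { intros i Hi. unfold applyM, y.
      transitivity (sumR d (fun j => sumR d (fun k => U' i k * s' k * V' j k) * V' j O)).
      - apply sumR_ext; intros j Hj. rewrite HB' by auto. reflexivity.
      - setoid_rewrite <- sumR_scal_r. rewrite sumR_swap.
        transitivity (sumR d (fun k => U' i k * s' k * idM k O)).
        + apply sumR_ext; intros k Hk. rewrite <- (HV' k O Hk ltac:(lia)). rewrite <- sumR_scal_l.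
          apply sumR_ext; intros; ring.
        + rewrite (sumR_delta_r d (fun k => U' i k * s' k) O) by lia. ring. }
    assert (EN : nsq d (applyM d B' y) = s' O ^ 2).
    { rewrite (nsq_ext d _ (fun i => s' O * U' i O)) by auto. rewrite nsq_scal.
      unfold nsq. rewrite (sumR_ext d _ (fun k => U' k O * U' k O)) by (intros; ring).
      rewrite HU' by lia. rewrite idM_eq. ring. }
    pose proof (F3 y). rewrite EN, Ey in H. pose proof (Hs'0 O Hd). nra. }
  set (s := fun k => match k with O => sg | S k' => s' k' end).
  exists (mulM D Hu' (ext1 U')), s, (mulM D Hv' (ext1 V')).
  split; [apply orthogonal_mulM; auto; apply orthogonal_ext1; auto|].
  split; [apply orthogonal_mulM; auto; apply orthogonal_ext1; auto|].
  split; [intros [|k] Hk; simpl; auto; apply Hs'0; unfold D in *; lia|].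
  split; [intros [|k] Hk; simpl; [apply F4; unfold D in *; lia| apply Hs'm; unfold D in *; lia]|].
  intros i j Hi Hj.
  assert (F5 : forall p q, (p < D)%nat -> (q < D)%nat ->
     B p q = sumR D (fun k => ext1 U' p k * s k * ext1 V' q k)).
  { intros p q Hp Hq. unfold D. rewrite sumR_S_l.
    destruct p as [|p]; destruct q as [|q]; simpl.
    - rewrite F1 by auto. rewrite idM_eq. rewrite sumR_ext with (g := fun _ => 0) by (intros; simpl; ring).
      rewrite sumR_zero. ring.
    - rewrite F2 by lia. rewrite sumR_ext with (g := fun _ => 0) by (intros; simpl; ring).
      rewrite sumR_zero. ring.
    - rewrite F1 by auto. rewrite idM_neq by lia. rewrite sumR_ext with (g := fun _ => 0) by (intros; simpl; ring).
      rewrite sumR_zero. ring.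
    - change (B (S p) (S q)) with (B' p q). rewrite HB' by (unfold D in *; lia). ring_simplify.
      apply sumR_ext; intros; simpl; ring. }
  assert (F6 : A i j = sumR D (fun p => Hu' i p * sumR D (fun q => B p q * Hv' j q))).
  { transitivity (sumR D (fun p => Hu' i p * sumR D (fun k => Hu' k p * A k j))).
    - rewrite (contract_l D Hu' (fun k => A k j)); auto.
    - apply sumR_ext; intros p Hp. f_equal. unfold B.
      unfold mulM at 1. rewrite (contract_r D Hv' (fun l => mulM D (trM Hu') A p l) j); auto. }
  rewrite F6.
  transitivity (sumR D (fun p => Hu' i p * sumR D (fun q => sumR D (fun k => ext1 U' p k * s k * ext1 V' q k) * Hv' j q))).
  - apply sumR_ext; intros p Hp. f_equal. apply sumR_ext; intros q Hq. rewrite F5; auto.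
  - unfold mulM.
    transitivity (sumR D (fun p => sumR D (fun q => sumR D (fun k =>
       Hu' i p * ext1 U' p k * s k * (Hv' j q * ext1 V' q k))))).
    + apply sumR_ext; intros p _. rewrite <- sumR_scal_l. apply sumR_ext; intros q _.
      rewrite <- sumR_scal_r, <- sumR_scal_l. apply sumR_ext; intros; ring.
    + transitivity (sumR D (fun p => sumR D (fun k => sumR D (fun q =>
       Hu' i p * ext1 U' p k * s k * (Hv' j q * ext1 V' q k))))).
      * apply sumR_ext; intros; apply sumR_swap.
      * rewrite sumR_swap. apply sumR_ext; intros k _.
        symmetry. rewrite <- sumR_scal_r, <- sumR_scal_r. apply sumR_ext; intros p _.
        rewrite <- sumR_scal_l. apply sumR_ext; intros; ring.
Qed.
End SVD.

Definition vn d x := sqrt (nsq d x).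

Lemma vn_nonneg d x : 0 <= vn d x.
Proof. apply sqrt_pos. Qed.

Lemma vn_sq d x : vn d x ^ 2 = nsq d x.
Proof. unfold vn. rewrite pow2_sqrt; auto. apply nsq_nonneg. Qed.

Lemma vn_unit d x : nsq d x = 1 -> vn d x = 1.
Proof. intros H; unfold vn; rewrite H; apply sqrt_1. Qed.

Lemma vn_le_of_nsq d x y a : 0 <= a -> nsq d x <= a^2 * nsq d y -> vn d x <= a * vn d y.
Proof.
  intros Ha H. apply sqrt_sq_le. pose proof (vn_nonneg d y). nra.
  rewrite vn_sq. replace ((a * vn d y)^2) with (a^2 * vn d y ^2) by ring. rewrite vn_sq. auto.
Qed.

Lemma vn_ext d x y : (forall i, (i < d)%nat -> x i = y i) -> vn d x = vn d y.
Proof. intros H; unfold vn; rewrite (nsq_ext d x y H); auto. Qed.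

Lemma ip_comb d v u z t : ip d v (fun i => t * u i + z i) = t * ip d v u + ip d v z.
Proof. unfold ip. rewrite <- sumR_scal_l, <- sumR_plus. apply sumR_ext; intros; ring. Qed.

Lemma ip_unit_le d v z : nsq d v = 1 -> Rabs (ip d v z) <= vn d z.
Proof. apply abs_ip_unit. Qed.

Lemma decomp_norm d u z t : nsq d u = 1 ->
  Rabs t - vn d z <= vn d (fun i => t * u i + z i) <= Rabs t + vn d z.
Proof.
  intros Hu.
  assert (E : nsq d (fun i => t * u i + z i) = t^2 + 2 * t * ip d u z + nsq d z).
  { rewrite (nsq_ext d _ (fun i => t * u i + 1 * z i)) by (intros; ring).
    rewrite nsq_comb, Hu. ring. }
  pose proof (ip_unit_le d u z Hu) as Hip.
  pose proof (vn_nonneg d z) as Hz. pose proof (vn_sq d z) as Hz2.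
  pose proof (vn_nonneg d (fun i => t * u i + z i)) as Hy.
  pose proof (vn_sq d (fun i => t * u i + z i)) as Hy2. rewrite E in Hy2.
  assert (Ht2 : Rabs t ^ 2 = t ^ 2) by (rewrite <- Rsqr_pow2, <- Rsqr_abs, Rsqr_pow2; auto).
  assert (Hb : Rabs (2 * t * ip d u z) <= 2 * Rabs t * vn d z).
  { rewrite !Rabs_mult. rewrite (Rabs_right 2) by lra. pose proof (Rabs_pos t). nra. }
  assert (-(2 * Rabs t * vn d z) <= 2 * t * ip d u z <= 2 * Rabs t * vn d z).
  { pose proof (Rle_abs (2 * t * ip d u z)). pose proof (Rle_abs (- (2 * t * ip d u z))).
    rewrite Rabs_Ropp in H0. lra. }
  pose proof (Rabs_pos t).
  split.
  - destruct (Rle_dec (Rabs t) (vn d z)); [lra|]. apply sqrt_sq_le; auto. nra.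
  - apply sqrt_sq_le; [lra|]. nra.
Qed.

Lemma opnorm_props d A M : (1 <= d)%nat ->
  (forall x, nsq d x = 1 -> vn d (applyM d A x) <= M) ->
  opnorm d A <= M /\ (forall x, nsq d x = 1 -> vn d (applyM d A x) <= opnorm d A).
Proof.
  intros Hd HM.
  set (Sx := fun r => exists x : Vec, vnorm d x = 1 /\ r = vnorm d (applyM d A x)).
  assert (Hex : exists r, is_lub Sx r).
  { destruct (completeness Sx) as [m Hm].
    - exists M. intros r [x [Hx ->]]. apply HM.
      assert (nsq d x = vn d x ^ 2) by (rewrite vn_sq; auto). unfold vn in H. change (vnorm d x = 1) in Hx.
      unfold vnorm in Hx. fold (nsq d x) in Hx. rewrite Hx in H. lra.
    - exists (vnorm d (applyM d A (fun i => idM i O))). exists (fun i => idM i O). split; auto.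
      unfold vnorm. fold (nsq d (fun i => idM i O)). rewrite unit_e0; auto. apply sqrt_1.
    - exists m; auto. }
  assert (Hl := epsilon_spec (inhabits 0) (is_lub Sx) Hex). fold (opnorm d A) in Hl.
  change (epsilon (inhabits 0) (is_lub Sx)) with (opnorm d A) in Hl.
  destruct Hl as [Hub Hleast]. split.
  - apply Hleast. intros r [x [Hx ->]]. apply HM.
    unfold vnorm in Hx. fold (nsq d x) in Hx.
    assert (nsq d x = vn d x ^ 2) by (rewrite vn_sq; auto). unfold vn in H. rewrite Hx in H. lra.
  - intros x Hx. apply Hub. exists x. split; auto. unfold vnorm. fold (nsq d x). rewrite Hx. apply sqrt_1.
Qed.

Lemma applyM_ext d A x y i : (forall j, (j < d)%nat -> x j = y j) -> applyM d A x i = applyM d A y i.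
Proof. intros H. unfold applyM. apply sumR_ext; intros. rewrite H; auto. Qed.

Lemma ip_ext d v x y : (forall j, (j < d)%nat -> x j = y j) -> ip d v x = ip d v y.
Proof. intros H. unfold ip. apply sumR_ext; intros. rewrite H; auto. Qed.

Lemma applyM_id d x i : (i < d)%nat -> applyM d idM x i = x i.
Proof. intros Hi. unfold applyM. apply sumR_delta_l; auto. Qed.

Section Core.
Variables (d n' : nat) (eps kap : R) (L : nat -> Mat) (sg : nat -> R) (u v : nat -> Vec).
Hypothesis Hd : (1 <= d)%nat.
Hypothesis He0 : 0 < eps.
Hypothesis He1 : eps <= 1/5.
Hypothesis Hk0 : 0 < kap.
Hypothesis Hk1 : kap <= 1/6 * eps^2.
Hypothesis Hsg : forall i, (1 <= i <= S n')%nat -> 0 < sg i.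
Hypothesis Hu : forall i, (1 <= i <= S n')%nat -> nsq d (u i) = 1.
Hypothesis Hv : forall i, (1 <= i <= S n')%nat -> nsq d (v i) = 1.
Hypothesis HE : forall i x, (1 <= i <= S n')%nat ->
  nsq d (fun j => applyM d (L i) x j - sg i * ip d (v i) x * u i j) <= (kap * sg i)^2 * nsq d x.
Hypothesis HN : forall i x, (1 <= i <= S n')%nat -> nsq d (applyM d (L i) x) <= sg i ^ 2 * nsq d x.
Hypothesis Hop : forall i, (1 <= i <= S n')%nat -> opnorm d (L i) = sg i.
Hypothesis Hrho : forall i, (1 <= i <= n')%nat -> eps <= rho2 d (L i) (L (S i)).

Definition dl := 2 * kap / eps.
Definition cc := 3 * kap / eps ^ 2.

Lemma num_facts : kap <= dl /\ 0 <= dl <= 1/2 /\ kap * (1 + dl) <= dl * (eps - 2 * kap - dl)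
  /\ 0 <= cc <= 1/2 /\ 2 * kap + dl <= cc * eps /\ 2 * dl <= kap / eps ^ 2 /\ dl <= kap / eps^2.
Proof.
  set (q := kap / eps^2).
  assert (Hq : kap = q * eps^2) by (unfold q; field; lra).
  assert (Hq0 : 0 < q) by (unfold q; apply Rdiv_lt_0_compat; nra).
  assert (Hq1 : q <= 1/6) by (rewrite Hq in Hk1; nra).
  assert (Hdl : dl = 2 * q * eps) by (unfold dl; rewrite Hq; field; lra).
  assert (Hcc : cc = 3 * q) by (unfold cc; rewrite Hq; field; lra).
  rewrite Hdl, Hcc, Hq.
  repeat split; try nra.
Qed.

Definition rh k := rho2 d (L (S k)) (L (S (S k))).
Definition Ev i y := fun j => applyM d (L i) y j - sg i * ip d (v i) y * u i j.

Lemma Ev_bound i y : (1 <= i <= S n')%nat -> vn d (Ev i y) <= kap * sg i * vn d y.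
Proof. intros Hi. apply vn_le_of_nsq. pose proof (Hsg i Hi); nra. apply HE; auto. Qed.

Lemma L_decomp i y j : applyM d (L i) y j = (sg i * ip d (v i) y) * u i j + Ev i y j.
Proof. unfold Ev. ring. Qed.

Lemma L_norm i y : (1 <= i <= S n')%nat -> vn d (applyM d (L i) y) <= sg i * vn d y.
Proof. intros Hi. apply vn_le_of_nsq. pose proof (Hsg i Hi); lra. apply HN; auto. Qed.

Lemma rho_bounds K : (1 <= K <= n')%nat ->
  Rabs (ip d (v (S K)) (u K)) - 2 * kap <= rho2 d (L K) (L (S K)) <= Rabs (ip d (v (S K)) (u K)) + 2 * kap.
Proof.
  intros HK.
  assert (HK1 : (1 <= K <= S n')%nat) by lia. assert (HK2 : (1 <= S K <= S n')%nat) by lia.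
  set (a := ip d (v (S K)) (u K)). set (s1 := sg K). set (s2 := sg (S K)).
  assert (Hs1 : 0 < s1) by (apply Hsg; lia). assert (Hs2 : 0 < s2) by (apply Hsg; lia).
  set (M2 := mulM d (L (S K)) (L K)).
  assert (Rep : forall x, exists t z, (forall i, (i < d)%nat -> applyM d (L K) x i = t * u K i + z i)
     /\ t = s1 * ip d (v K) x /\ vn d z <= kap * s1 * vn d x).
  { intros x. exists (s1 * ip d (v K) x), (Ev K x). split; [|split]; auto.
    intros i _. apply L_decomp. apply Ev_bound; auto. }
  assert (Out : forall x t z, (forall i, (i < d)%nat -> applyM d (L K) x i = t * u K i + z i) ->
     forall i, applyM d M2 x i = (s2 * (t * a + ip d (v (S K)) z)) * u (S K) i + Ev (S K) (applyM d (L K) x) i).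
  { intros x t z Hxz i. unfold M2. rewrite applyM_mulM. rewrite L_decomp. f_equal. f_equal. f_equal.
    fold s2. f_equal. rewrite (ip_ext d _ _ (fun i => t * u K i + z i)) by auto. rewrite ip_comb. reflexivity. }
  assert (Up : forall x, nsq d x = 1 -> vn d (applyM d M2 x) <= s1 * s2 * (Rabs a + 2 * kap)).
  { intros x Hx. destruct (Rep x) as [t [z [Hxz [Ht Hz]]]].
    rewrite (vn_ext d _ _ (fun i _ => Out x t z Hxz i)).
    pose proof (decomp_norm d (u (S K)) (Ev (S K) (applyM d (L K) x)) (s2 * (t * a + ip d (v (S K)) z)) (Hu (S K) HK2)) as [_ H].
    eapply Rle_trans; [exact H|].
    rewrite (vn_unit d x Hx) in Hz.
    pose proof (Ev_bound (S K) (applyM d (L K) x) HK2) as HEv. fold s2 in HEv.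
    pose proof (L_norm K x HK1) as HLn. fold s1 in HLn. rewrite (vn_unit d x Hx) in HLn.
    pose proof (ip_unit_le d (v (S K)) z (Hv (S K) HK2)).
    pose proof (ip_unit_le d (v K) x (Hv K HK1)). rewrite (vn_unit d x Hx) in H1.
    assert (Rabs t <= s1). { rewrite Ht, Rabs_mult, (Rabs_right s1) by lra. nra. }
    rewrite Rabs_mult, (Rabs_right s2) by lra.
    assert (Rabs (t * a + ip d (v (S K)) z) <= s1 * Rabs a + kap * s1).
    { eapply Rle_trans; [apply Rabs_triang|]. rewrite Rabs_mult. pose proof (Rabs_pos a). pose proof (Rabs_pos t). nra. }
    pose proof (vn_nonneg d (applyM d (L K) x)).
    assert (vn d (Ev (S K) (applyM d (L K) x)) <= kap * s2 * s1).
    { eapply Rle_trans; [exact HEv|]. apply Rmult_le_compat_l; nra. }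
    assert (s2 * Rabs (t * a + ip d (v (S K)) z) <= s2 * (s1 * Rabs a + kap * s1)) by (apply Rmult_le_compat_l; lra).
    nra. }
  assert (Lo : s1 * s2 * (Rabs a - 2 * kap) <= vn d (applyM d M2 (v K))).
  { destruct (Rep (v K)) as [t [z [Hxz [Ht Hz]]]].
    rewrite (vn_ext d _ _ (fun i _ => Out (v K) t z Hxz i)).
    pose proof (decomp_norm d (u (S K)) (Ev (S K) (applyM d (L K) (v K))) (s2 * (t * a + ip d (v (S K)) z)) (Hu (S K) HK2)) as [H _].
    eapply Rle_trans; [|exact H].
    rewrite (vn_unit d (v K) (Hv K HK1)) in Hz.
    assert (Ht1 : t = s1) by (rewrite Ht, <- nsq_ip, Hv by auto; ring).
    pose proof (Ev_bound (S K) (applyM d (L K) (v K)) HK2) as HEv. fold s2 in HEv.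
    pose proof (L_norm K (v K) HK1) as HLn. fold s1 in HLn. rewrite (vn_unit d (v K) (Hv K HK1)) in HLn.
    pose proof (ip_unit_le d (v (S K)) z (Hv (S K) HK2)).
    rewrite Rabs_mult, (Rabs_right s2) by lra.
    assert (s1 * Rabs a - kap * s1 <= Rabs (t * a + ip d (v (S K)) z)).
    { rewrite Ht1. pose proof (Rabs_triang_inv (s1 * a) (- ip d (v (S K)) z)).
      rewrite Rabs_Ropp in H1. replace (s1 * a - - ip d (v (S K)) z) with (s1 * a + ip d (v (S K)) z) in H1 by ring.
      rewrite Rabs_mult, (Rabs_right s1) in H1 by lra. nra. }
    pose proof (vn_nonneg d (applyM d (L K) (v K))).
    assert (vn d (Ev (S K) (applyM d (L K) (v K))) <= kap * s2 * s1).
    { eapply Rle_trans; [exact HEv|]. apply Rmult_le_compat_l; nra. }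
    assert (s2 * (s1 * Rabs a - kap * s1) <= s2 * Rabs (t * a + ip d (v (S K)) z)) by (apply Rmult_le_compat_l; lra).
    nra. }
  destruct (opnorm_props d M2 _ Hd Up) as [Hop1 Hop2].
  pose proof (Hop2 (v K) (Hv K HK1)) as Hop3.
  unfold rho2. fold M2. rewrite (Hop K HK1), (Hop (S K) HK2). fold s1 s2.
  split.
  - apply (Rmult_le_reg_r (s2 * s1)). nra. unfold Rdiv. rewrite Rmult_assoc, Rinv_l by nra. nra.
  - apply (Rmult_le_reg_r (s2 * s1)). nra. unfold Rdiv. rewrite Rmult_assoc, Rinv_l by nra. nra.
Qed.


Lemma prodM_step j x i : applyM d (prodM d L (S (S j))) x i = applyM d (L (S (S j))) (applyM d (prodM d L (S j)) x) i.
Proof. change (prodM d L (S (S j))) with (mulM d (L (S (S j))) (prodM d L (S j))). apply applyM_mulM. Qed.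

Lemma prodM_one x i : (i < d)%nat -> applyM d (prodM d L 1) x i = applyM d (L 1) x i.
Proof. intros Hi. change (prodM d L 1) with (mulM d (L 1) idM). rewrite applyM_mulM. apply applyM_ext. intros; apply applyM_id; auto. Qed.

Definition TU j := prodR (S j) (fun k => sg (S k)) * prodR j rh * (1 + cc) ^ j.
Definition TL j := prodR (S j) (fun k => sg (S k)) * prodR j rh * (1 - cc) ^ j.

Lemma prod_sg_pos j : (j <= S n')%nat -> 0 < prodR j (fun k => sg (S k)).
Proof. induction j; intros Hj; simpl; [lra|]. pose proof (IHj ltac:(lia)). pose proof (Hsg (S j) ltac:(lia)). nra. Qed.

Lemma rh_ge k : (k < n')%nat -> eps <= rh k.
Proof. intros Hk. unfold rh. apply Hrho. lia. Qed.

Lemma prod_rh_pos j : (j <= n')%nat -> 0 < prodR j rh.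
Proof. induction j; intros Hj; simpl; [lra|]. pose proof (IHj ltac:(lia)). pose proof (rh_ge j ltac:(lia)). nra. Qed.

Lemma step_repr j x t z : (S j <= n')%nat ->
  (forall i, (i < d)%nat -> applyM d (prodM d L (S j)) x i = t * u (S j) i + z i) ->
  forall i, (i < d)%nat -> applyM d (prodM d L (S (S j))) x i =
    (sg (S (S j)) * (t * ip d (v (S (S j))) (u (S j)) + ip d (v (S (S j))) z)) * u (S (S j)) i
    + Ev (S (S j)) (applyM d (prodM d L (S j)) x) i.
Proof.
  intros Hj Hrep i Hi. rewrite prodM_step, L_decomp. f_equal. f_equal. f_equal.
  rewrite (ip_ext d _ _ (fun i => t * u (S j) i + z i)) by auto. apply ip_comb.
Qed.

Lemma upper_chain j : (j <= n')%nat -> forall x, nsq d x = 1 -> exists t z,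
  (forall i, (i < d)%nat -> applyM d (prodM d L (S j)) x i = t * u (S j) i + z i) /\
  Rabs t <= TU j /\ vn d z <= dl * TU j.
Proof.
  destruct num_facts as [N1 [N2 [N3 [N4 [N5 [N6 N7]]]]]].
  induction j; intros Hj x Hx.
  - assert (H1 : (1 <= 1 <= S n')%nat) by lia.
    exists (sg 1 * ip d (v 1) x), (Ev 1 x). split; [|split].
    + intros i Hi. rewrite prodM_one by auto. apply L_decomp.
    + unfold TU. simpl. rewrite Rabs_mult, (Rabs_right (sg 1)) by (pose proof (Hsg 1 H1); lra).
      pose proof (ip_unit_le d (v 1) x (Hv 1 H1)). rewrite (vn_unit d x Hx) in H. pose proof (Hsg 1 H1).
      pose proof (Rabs_pos (ip d (v 1) x)). nra.
    + unfold TU. simpl. pose proof (Ev_bound 1 x H1). rewrite (vn_unit d x Hx) in H. pose proof (Hsg 1 H1). nra.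
  - destruct (IHj ltac:(lia) x Hx) as [t [z [Hrep [Ht Hz]]]].
    set (K := S j). assert (HK : (1 <= K <= n')%nat) by (unfold K; lia).
    assert (HK2 : (1 <= S K <= S n')%nat) by lia.
    set (a := ip d (v (S K)) (u K)). set (y := applyM d (prodM d L (S j)) x).
    set (s' := sg (S K)). assert (Hs' : 0 < s') by (apply Hsg; lia).
    exists (s' * (t * a + ip d (v (S K)) z)), (Ev (S K) y). split; [|split].
    + apply step_repr; auto.
    + pose proof (rho_bounds K HK) as [Hr1 Hr2]. fold a in Hr1, Hr2.
      assert (Hrh : rh j = rho2 d (L K) (L (S K))) by reflexivity.
      pose proof (rh_ge j ltac:(lia)) as Hre. rewrite Hrh in Hre.
      assert (HT : TU K = TU j * (s' * rh j * (1 + cc))).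
      { unfold TU, s', K. simpl. ring. }
      rewrite HT, Hrh.
      assert (HT0 : 0 <= TU j) by (pose proof (Rabs_pos t); lra).
      pose proof (ip_unit_le d (v (S K)) z (Hv (S K) HK2)).
      assert (Rabs (t * a + ip d (v (S K)) z) <= TU j * (Rabs a + dl)).
      { eapply Rle_trans; [apply Rabs_triang|]. rewrite Rabs_mult.
        pose proof (Rabs_pos a). pose proof (Rabs_pos t). nra. }
      rewrite Rabs_mult, (Rabs_right s') by lra.
      assert (Rabs a + dl <= rho2 d (L K) (L (S K)) * (1 + cc)) by nra.
      assert (s' * Rabs (t * a + ip d (v (S K)) z) <= s' * (TU j * (Rabs a + dl))) by (apply Rmult_le_compat_l; lra).
      assert (s' * (TU j * (Rabs a + dl)) <= s' * (TU j * (rho2 d (L K) (L (S K)) * (1 + cc)))).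
      { apply Rmult_le_compat_l; [lra|]. apply Rmult_le_compat_l; lra. }
      nra.
    + pose proof (rho_bounds K HK) as [Hr1 Hr2]. fold a in Hr1, Hr2.
      assert (Hrh : rh j = rho2 d (L K) (L (S K))) by reflexivity.
      pose proof (rh_ge j ltac:(lia)) as Hre. rewrite Hrh in Hre.
      assert (HT : TU K = TU j * (s' * rh j * (1 + cc))).
      { unfold TU, s', K. simpl. ring. }
      rewrite HT, Hrh.
      assert (HT0 : 0 <= TU j) by (pose proof (Rabs_pos t); lra).
      pose proof (Ev_bound (S K) y HK2) as HEv. fold s' in HEv.
      assert (Hy : vn d y <= (1 + dl) * TU j).
      { rewrite (vn_ext d y (fun i => t * u K i + z i)) by (intros; unfold y; apply Hrep; auto).
        pose proof (decomp_norm d (u K) z t (Hu K ltac:(lia))) as [_ H]. lra. }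
      assert (kap * (1 + dl) <= dl * rho2 d (L K) (L (S K)) * (1 + cc)).
      { assert (A1 : kap * (1 + dl) <= dl * eps).
        { assert (0 <= dl * (2 * kap + dl)) by (apply Rmult_le_pos; lra). nra. }
        assert (A2 : dl * eps <= dl * rho2 d (L K) (L (S K))) by (apply Rmult_le_compat_l; lra).
        assert (0 <= dl * rho2 d (L K) (L (S K))) by (apply Rmult_le_pos; lra).
        assert (A3 : dl * rho2 d (L K) (L (S K)) <= dl * rho2 d (L K) (L (S K)) * (1 + cc)) by nra.
        lra. }
      assert (kap * s' * vn d y <= kap * s' * ((1 + dl) * TU j)) by (apply Rmult_le_compat_l; nra).
      assert (kap * s' * ((1 + dl) * TU j) = s' * TU j * (kap * (1 + dl))) by ring.
      assert (s' * TU j * (kap * (1 + dl)) <= s' * TU j * (dl * rho2 d (L K) (L (S K)) * (1 + cc))).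
      { apply Rmult_le_compat_l; [nra|lra]. }
      nra.
Qed.

Lemma lower_chain j : (j <= n')%nat -> exists t z,
  (forall i, (i < d)%nat -> applyM d (prodM d L (S j)) (v 1) i = t * u (S j) i + z i) /\
  TL j <= Rabs t /\ vn d z <= dl * Rabs t.
Proof.
  destruct num_facts as [N1 [N2 [N3 [N4 [N5 [N6 N7]]]]]].
  assert (H1 : (1 <= 1 <= S n')%nat) by lia.
  induction j; intros Hj.
  - exists (sg 1 * ip d (v 1) (v 1)), (Ev 1 (v 1)).
    assert (Ht : sg 1 * ip d (v 1) (v 1) = sg 1) by (rewrite <- nsq_ip, Hv by auto; ring).
    rewrite Ht. pose proof (Hsg 1 H1). split; [|split].
    + intros i Hi. rewrite prodM_one by auto. rewrite L_decomp. rewrite Ht. reflexivity.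
    + unfold TL. simpl. rewrite Rabs_right by lra. lra.
    + pose proof (Ev_bound 1 (v 1) H1). rewrite (vn_unit d (v 1) (Hv 1 H1)) in H0.
      rewrite Rabs_right by lra. nra.
  - destruct (IHj ltac:(lia)) as [t [z [Hrep [Ht Hz]]]].
    set (K := S j). assert (HK : (1 <= K <= n')%nat) by (unfold K; lia).
    assert (HK2 : (1 <= S K <= S n')%nat) by lia.
    set (a := ip d (v (S K)) (u K)). set (y := applyM d (prodM d L (S j)) (v 1)).
    set (s' := sg (S K)). assert (Hs' : 0 < s') by (apply Hsg; lia).
    pose proof (rho_bounds K HK) as [Hr1 Hr2]. fold a in Hr1, Hr2.
    assert (Hrh : rh j = rho2 d (L K) (L (S K))) by reflexivity.
    pose proof (rh_ge j ltac:(lia)) as Hre. rewrite Hrh in Hre.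
    assert (HT0 : 0 <= TL j).
    { unfold TL. apply Rmult_le_pos; [apply Rmult_le_pos|].
      - pose proof (prod_sg_pos (S j) ltac:(lia)); lra.
      - pose proof (prod_rh_pos j ltac:(lia)); lra.
      - apply pow_le. lra. }
    assert (Hta : Rabs t * (Rabs a - dl) <= Rabs (t * a + ip d (v (S K)) z)).
    { pose proof (Rabs_triang_inv (t * a) (- ip d (v (S K)) z)).
      rewrite Rabs_Ropp in H. replace (t * a - - ip d (v (S K)) z) with (t * a + ip d (v (S K)) z) in H by ring.
      rewrite Rabs_mult in H. pose proof (ip_unit_le d (v (S K)) z (Hv (S K) HK2)). nra. }
    assert (Hadl : rho2 d (L K) (L (S K)) * (1 - cc) <= Rabs a - dl) by nra.
    exists (s' * (t * a + ip d (v (S K)) z)), (Ev (S K) y). split; [|split].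
    + apply step_repr; auto.
    + assert (HT : TL K = TL j * (s' * rh j * (1 - cc))).
      { unfold TL, s', K. simpl. ring. }
      rewrite HT, Hrh. rewrite Rabs_mult, (Rabs_right s') by lra.
      assert (0 <= rho2 d (L K) (L (S K)) * (1 - cc)) by nra.
      assert (TL j * (rho2 d (L K) (L (S K)) * (1 - cc)) <= Rabs t * (Rabs a - dl)).
      { apply Rmult_le_compat; lra. }
      assert (s' * (TL j * (rho2 d (L K) (L (S K)) * (1 - cc))) <= s' * Rabs (t * a + ip d (v (S K)) z))
        by (apply Rmult_le_compat_l; lra).
      nra.
    + pose proof (Ev_bound (S K) y HK2) as HEv. fold s' in HEv.
      assert (Hy : vn d y <= (1 + dl) * Rabs t).
      { rewrite (vn_ext d y (fun i => t * u K i + z i)) by (intros; unfold y; apply Hrep; auto).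
        pose proof (decomp_norm d (u K) z t (Hu K ltac:(lia))) as [_ H]. lra. }
      assert (kap * (1 + dl) <= dl * (Rabs a - dl)) by nra.
      rewrite Rabs_mult, (Rabs_right s') by lra.
      pose proof (Rabs_pos t).
      assert (kap * s' * vn d y <= kap * s' * ((1 + dl) * Rabs t)) by (apply Rmult_le_compat_l; nra).
      assert (s' * Rabs t * (kap * (1 + dl)) <= s' * Rabs t * (dl * (Rabs a - dl))) by (apply Rmult_le_compat_l; nra).
      assert (dl * (s' * (Rabs t * (Rabs a - dl))) <= dl * (s' * Rabs (t * a + ip d (v (S K)) z))).
      { apply Rmult_le_compat_l; [lra|]. apply Rmult_le_compat_l; lra. }
      nra.
Qed.


Lemma exp_le' x y : x <= y -> exp x <= exp y.
Proof. intros H. destruct (Rle_lt_or_eq_dec x y H) as [H1|H1]; [apply Rlt_le, exp_increasing; auto| subst; lra]. Qed.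

Lemma exp_pow_INR x m : exp x ^ m = exp (INR m * x).
Proof. induction m. simpl. rewrite Rmult_0_l, exp_0. reflexivity.
  rewrite S_INR. simpl pow. rewrite IHm, <- exp_plus. f_equal. ring. Qed.

Lemma exp_neg_le x : 0 <= x <= 1/2 -> exp (- (2 * x)) <= 1 - x.
Proof.
  intros Hx. rewrite exp_Ropp. pose proof (exp_ineq1_le (2 * x)). pose proof (exp_pos (2 * x)).
  apply (Rmult_le_reg_r (exp (2 * x))); auto. rewrite Rinv_l by lra. nra.
Qed.

Lemma prodR_ext m f g : (forall k, (k < m)%nat -> f k = g k) -> prodR m f = prodR m g.
Proof. induction m; intros H; simpl; auto. rewrite IHm by (intros; apply H; lia). rewrite H by lia. reflexivity. Qed.

Lemma final_bounds :
  exp (- (11 * INR (S n') * kap / eps ^ 2))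
    <= rho d L (S n') / prodR n' rh
  /\ rho d L (S n') / prodR n' rh <= exp (11 * INR (S n') * kap / eps ^ 2).
Proof.
  destruct num_facts as [N1 [N2 [N3 [N4 [N5 [N6 N7]]]]]].
  set (P := prodM d L (S n')).
  set (Sg := prodR (S n') (fun k => sg (S k))). set (Rh := prodR n' rh).
  assert (HSg : 0 < Sg) by (apply prod_sg_pos; lia).
  assert (HRh : 0 < Rh) by (apply prod_rh_pos; lia).
  assert (Hden : prodR (S n') (fun k => opnorm d (L (S k))) = Sg).
  { unfold Sg. apply prodR_ext. intros k Hk. apply Hop. lia. }
  assert (HTU : TU n' = Sg * Rh * (1 + cc) ^ n') by reflexivity.
  assert (HTL : TL n' = Sg * Rh * (1 - cc) ^ n') by reflexivity.
  assert (Up : forall x, nsq d x = 1 -> vn d (applyM d P x) <= (1 + dl) * TU n').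
  { intros x Hx. destruct (upper_chain n' ltac:(lia) x Hx) as [t [z [Hrep [Ht Hz]]]].
    rewrite (vn_ext d _ (fun i => t * u (S n') i + z i)) by auto.
    pose proof (decomp_norm d (u (S n')) z t (Hu (S n') ltac:(lia))) as [_ H]. lra. }
  destruct (opnorm_props d P _ Hd Up) as [Hop1 Hop2].
  destruct (lower_chain n' ltac:(lia)) as [t [z [Hrep [Ht Hz]]]].
  assert (Lo : (1 - dl) * TL n' <= opnorm d P).
  { eapply Rle_trans; [|apply (Hop2 (v 1)); apply Hv; lia].
    rewrite (vn_ext d _ (fun i => t * u (S n') i + z i)) by auto.
    pose proof (decomp_norm d (u (S n')) z t (Hu (S n') ltac:(lia))) as [H _].
    assert ((1 - dl) * TL n' <= (1 - dl) * Rabs t) by (apply Rmult_le_compat_l; lra).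
    nra. }
  assert (Hratio : rho d L (S n') / Rh = opnorm d P / (Sg * Rh)).
  { unfold rho. fold P. rewrite Hden. field. lra. }
  rewrite Hratio.
  assert (Hc0 : 0 <= cc) by lra.
  set (E := kap / eps ^ 2).
  assert (HE' : 11 * INR (S n') * kap / eps ^ 2 = 11 * INR (S n') * E) by (unfold E; field; lra).
  rewrite HE'.
  assert (Hn : INR (S n') = INR n' + 1) by apply S_INR.
  assert (Hn0 : 0 <= INR n') by apply pos_INR.
  assert (HccE : cc = 3 * E) by (unfold cc, E; field; lra).
  assert (HE0 : 0 < E) by (unfold E; apply Rdiv_lt_0_compat; nra).
  split.
  - apply (Rmult_le_reg_r (Sg * Rh)). nra. assert (Hc : opnorm d P / (Sg * Rh) * (Sg * Rh) = opnorm d P) by (field; lra). rewrite Hc.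
    eapply Rle_trans; [|exact Lo]. rewrite HTL.
    assert (Hx1 : exp (- (2 * dl)) <= 1 - dl) by (apply exp_neg_le; lra).
    assert (Hx2 : exp (- (2 * cc)) ^ n' <= (1 - cc) ^ n').
    { apply pow_incr. split; [apply Rlt_le, exp_pos| apply exp_neg_le; lra]. }
    rewrite exp_pow_INR in Hx2.
    assert (Hsplit : exp (- (11 * INR (S n') * E)) <= exp (- (2 * dl)) * exp (INR n' * - (2 * cc))).
    { rewrite <- exp_plus. apply exp_le'. rewrite Hn, HccE. nra. }
    assert (0 <= exp (- (2 * dl))) by (apply Rlt_le, exp_pos).
    assert (0 <= exp (INR n' * - (2 * cc))) by (apply Rlt_le, exp_pos).
    assert (exp (- (2 * dl)) * exp (INR n' * - (2 * cc)) <= (1 - dl) * (1 - cc) ^ n').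
    { apply Rmult_le_compat; auto. }
    assert (0 <= Sg * Rh) by nra.
    assert (exp (- (11 * INR (S n') * E)) * (Sg * Rh) <= (1 - dl) * (1 - cc) ^ n' * (Sg * Rh)).
    { apply Rmult_le_compat_r; lra. }
    nra.
  - apply (Rmult_le_reg_r (Sg * Rh)). nra. assert (Hc : opnorm d P / (Sg * Rh) * (Sg * Rh) = opnorm d P) by (field; lra). rewrite Hc.
    eapply Rle_trans; [exact Hop1|]. rewrite HTU.
    assert (Hx1 : 1 + dl <= exp dl) by apply exp_ineq1_le.
    assert (Hx2 : (1 + cc) ^ n' <= exp cc ^ n').
    { apply pow_incr. split; [lra|]. apply exp_ineq1_le. }
    rewrite exp_pow_INR in Hx2.
    assert (Hsplit : exp dl * exp (INR n' * cc) <= exp (11 * INR (S n') * E)).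
    { rewrite <- exp_plus. apply exp_le'. rewrite Hn, HccE. nra. }
    assert (0 <= (1 + cc) ^ n') by (apply pow_le; lra).
    assert ((1 + dl) * (1 + cc) ^ n' <= exp dl * exp (INR n' * cc)) by (apply Rmult_le_compat; lra).
    assert (0 <= Sg * Rh) by nra.
    assert ((1 + dl) * (1 + cc) ^ n' * (Sg * Rh) <= exp (11 * INR (S n') * E) * (Sg * Rh)).
    { apply Rmult_le_compat_r; lra. }
    nra.
Qed.

End Core.

Lemma svd_apply d A U s V x i : (i < d)%nat ->
  (forall i j, (i < d)%nat -> (j < d)%nat -> A i j = sumR d (fun k => U i k * s k * V j k)) ->
  applyM d A x i = sumR d (fun k => U i k * (s k * sumR d (fun j => V j k * x j))).
Proof.
  intros Hi HA. unfold applyM.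
  transitivity (sumR d (fun j => sumR d (fun k => U i k * s k * V j k) * x j)).
  - apply sumR_ext; intros j Hj. rewrite HA; auto.
  - setoid_rewrite <- sumR_scal_r. rewrite sumR_swap. apply sumR_ext; intros k _.
    rewrite <- sumR_scal_l, <- sumR_scal_l. apply sumR_ext; intros; ring.
Qed.

Lemma bessel d V x : orthogonal d V -> sumR d (fun k => (sumR d (fun j => V j k * x j))^2) <= nsq d x.
Proof.
  intros HV. set (c := fun k => sumR d (fun j => V j k * x j)).
  change (sumR d (fun k => c k ^ 2) <= nsq d x).
  set (w := fun j => sumR d (fun k => V j k * c k)).
  assert (H0 := nsq_nonneg d (fun j => 1 * x j + (-1) * w j)).
  rewrite nsq_comb in H0.
  assert (Hw : nsq d w = sumR d (fun k => c k ^ 2)) by (unfold nsq, w; apply orth_iso; auto).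
  assert (Hxw : ip d x w = sumR d (fun k => c k ^ 2)).
  { unfold ip, w. setoid_rewrite <- sumR_scal_l. rewrite sumR_swap. apply sumR_ext; intros k _.
    transitivity (sumR d (fun j => V j k * x j) * c k).
    - rewrite <- sumR_scal_r. apply sumR_ext; intros; ring.
    - unfold c. ring. }
  rewrite Hw, Hxw in H0. lra.
Qed.

Lemma svd_sorted d s : (forall k, (S k < d)%nat -> s (S k) <= s k) ->
  forall a b, (a <= b)%nat -> (b < d)%nat -> s b <= s a.
Proof.
  intros Hs a b Hab. induction b; intros Hb.
  - replace a with O by lia. lra.
  - destruct (PeanoNat.Nat.eq_dec a (S b)) as [->|Hne]; [lra|].
    pose proof (Hs b Hb). pose proof (IHb ltac:(lia) ltac:(lia)). lra.
Qed.

Lemma decomp_of_svd d A kap U s V :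
  (2 <= d)%nat -> 0 < kap -> invertible d A -> / kap <= s O / s 1%nat -> is_svd d A U s V ->
  exists sg u v, 0 < sg /\ nsq d u = 1 /\ nsq d v = 1 /\
   (forall x, nsq d (fun j => applyM d A x j - sg * ip d v x * u j) <= (kap * sg)^2 * nsq d x) /\
   (forall x, nsq d (applyM d A x) <= sg ^ 2 * nsq d x) /\ opnorm d A = sg.
Proof.
  intros Hd Hk Hinv Hgr [HU [HV [Hs0 [Hsm HA]]]].
  pose proof (svd_sorted d s Hsm) as Hsort.
  set (sg := s O). set (u := fun i => U i O). set (v := fun j => V j O).
  assert (Hu : nsq d u = 1).
  { unfold nsq, u. transitivity (idM O O); [|apply idM_eq]. rewrite <- (HU O O) by lia. apply sumR_ext; intros; ring. }
  assert (Hv : nsq d v = 1).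
  { unfold nsq, v. transitivity (idM O O); [|apply idM_eq]. rewrite <- (HV O O) by lia. apply sumR_ext; intros; ring. }
  assert (Hsg0 : 0 <= sg) by (apply Hs0; lia).
  assert (Hs1 : 0 <= s 1%nat) by (apply Hs0; lia).
  assert (Hs1k : s 1%nat <= kap * sg).
  { destruct (Req_dec (s 1%nat) 0) as [H0|H0]. rewrite H0. nra.
    assert (Hp : 0 < s 1%nat) by lra.
    assert (H2 : / kap * s 1%nat <= sg) by (unfold sg; apply (Rmult_le_reg_r (/ s 1%nat)); [apply Rinv_0_lt_compat; lra|];
      replace (/ kap * s 1%nat * / s 1%nat) with (/ kap) by (field; lra); exact Hgr).
    apply (Rmult_le_reg_l (/ kap)). apply Rinv_0_lt_compat; lra.
    replace (/ kap * (kap * sg)) with sg by (field; lra). exact H2. }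
  set (c := fun x k => sumR d (fun j => V j k * x j)).
  assert (HN : forall x, nsq d (applyM d A x) <= sg ^ 2 * nsq d x).
  { intros x. rewrite (nsq_ext d _ (fun i => sumR d (fun k => U i k * (s k * c x k))))
      by (intros; apply svd_apply; auto).
    unfold nsq at 1. rewrite orth_iso by auto.
    pose proof (bessel d V x HV) as Hb. fold (c x) in Hb.
    eapply Rle_trans; [|apply Rmult_le_compat_l; [nra| exact Hb]].
    rewrite <- sumR_scal_l. apply sumR_le. intros k Hkk.
    assert (s k <= sg) by (apply Hsort; lia). pose proof (Hs0 k Hkk).
    pose proof (pow2_ge_0 (c x k)). assert (s k ^ 2 <= sg ^ 2) by nra.
    replace ((s k * c x k) ^ 2) with (s k ^ 2 * c x k ^ 2) by ring. apply Rmult_le_compat_r; auto. }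
  assert (HE : forall x, nsq d (fun j => applyM d A x j - sg * ip d v x * u j) <= (kap * sg)^2 * nsq d x).
  { intros x.
    rewrite (nsq_ext d _ (fun i => sumR d (fun k => U i k * (s k * c x k - idM k O * (sg * c x O))))).
    - unfold nsq at 1. rewrite orth_iso by auto.
      pose proof (bessel d V x HV) as Hb. fold (c x) in Hb.
      eapply Rle_trans; [|apply Rmult_le_compat_l; [nra| exact Hb]].
      rewrite <- sumR_scal_l. apply sumR_le. intros k Hkk.
      destruct k as [|k].
      + rewrite idM_eq. unfold sg. pose proof (pow2_ge_0 (c x O)). nra.
      + rewrite idM_neq by lia.
        assert (s (S k) <= s 1%nat) by (apply Hsort; lia). pose proof (Hs0 (S k) Hkk).
        pose proof (pow2_ge_0 (c x (S k))).
        assert (s (S k) <= kap * sg) by lra.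
        assert (0 <= kap * sg) by nra.
        replace ((s (S k) * c x (S k) - 0 * (sg * c x O)) ^ 2) with (s (S k) ^ 2 * c x (S k) ^ 2) by ring.
        change (s (S k) ^ 2 * c x (S k) ^ 2 <= (kap * sg) ^ 2 * c x (S k) ^ 2). apply Rmult_le_compat_r; [lra|]. apply pow_incr; lra.
    - intros i Hi. rewrite (svd_apply d A U s V x i Hi HA).
      transitivity (sumR d (fun k => U i k * (s k * c x k)) - sumR d (fun k => idM O k * (U i k * (sg * c x O)))).
      + rewrite sumR_delta_l by lia. unfold u, ip, v, c. ring.
      + rewrite <- sumR_minus. apply sumR_ext; intros k _. rewrite idM_sym. ring. }
  assert (Hsgp : 0 < sg).
  { destruct (Req_dec sg 0) as [H0|H0]; [|lra]. exfalso.
    destruct Hinv as [Bi HBi]. destruct (HBi O O ltac:(lia) ltac:(lia)) as [H1 _].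
    rewrite idM_eq in H1. unfold mulM in H1.
    rewrite sumR_ext with (g := fun _ => 0) in H1. rewrite sumR_zero in H1. lra.
    intros k Hk2. rewrite HA by lia.
    rewrite sumR_ext with (g := fun _ => 0). rewrite sumR_zero; ring.
    intros l Hl. assert (Hsl : s l <= sg) by (apply Hsort; lia). pose proof (Hs0 l Hl) as Hsl2.
    assert (Hsl3 : s l = 0) by (unfold sg in *; lra). rewrite Hsl3. ring. }
  exists sg, u, v. split; auto. split; auto. split; auto. split; auto. split; auto.
  assert (Up : forall x, nsq d x = 1 -> vn d (applyM d A x) <= sg).
  { intros x Hx. replace sg with (sg * vn d x) by (rewrite vn_unit; auto; ring). apply vn_le_of_nsq; auto. }
  destruct (opnorm_props d A sg ltac:(lia) Up) as [H1 H2].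
  pose proof (H2 v Hv) as H3.
  assert (Hav : vn d (applyM d A v) = sg).
  { rewrite (vn_ext d _ (fun i => sg * u i + 0)).
    - assert (E : vn d (fun i => sg * u i + 0) = vn d (fun i => sg * u i)) by (apply vn_ext; intros; ring).
      rewrite E. unfold vn. rewrite nsq_scal, Hu, Rmult_1_r. rewrite sqrt_pow2; lra.
    - intros i Hi. rewrite (svd_apply d A U s V v i Hi HA).
      rewrite (sumR_ext d _ (fun k => (U i k * s k) * idM k O)).
      + rewrite sumR_delta_r by lia. unfold u, sg. ring.
      + intros k Hk2. unfold v. rewrite <- (HV k O Hk2 ltac:(lia)). ring. }
  lra.
Qed.

Lemma choice3 (P : nat -> R -> Vec -> Vec -> Prop) n :
  (forall i, (1 <= i <= n)%nat -> exists a b c, P i a b c) ->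
  exists f g h, forall i, (1 <= i <= n)%nat -> P i (f i) (g i) (h i).
Proof.
  intros H.
  set (F := fun i => epsilon (inhabits (0, (fun _ : nat => 0), (fun _ : nat => 0)))
     (fun t : R * Vec * Vec => P i (fst (fst t)) (snd (fst t)) (snd t))).
  exists (fun i => fst (fst (F i))), (fun i => snd (fst (F i))), (fun i => snd (F i)).
  intros i Hi. unfold F. apply (epsilon_spec (inhabits (0, (fun _ : nat => 0), (fun _ : nat => 0)))
     (fun t : R * Vec * Vec => P i (fst (fst t)) (snd (fst t)) (snd t))).
  destruct (H i Hi) as [a [b [c Habc]]]. exists (a, b, c). simpl. exact Habc.
Qed.

Section Main.
Variable ballmax : forall d A, exists c, nsq d c <= 1 /\ forall x, nsq d x <= 1 -> Qf d A x <= Qf d A c.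

Lemma main_from_ballmax (d n : nat) (eps kappa : R) (L : nat -> Mat) :
  (2 <= d)%nat -> (36 <= n)%nat ->
  0 < eps -> eps <= 1 / 5 ->
  0 < kappa -> kappa <= 1 / 6 * eps ^ 2 ->
  (forall i, (1 <= i <= n)%nat -> invertible d (L i)) ->
  (forall i, (1 <= i <= n)%nat -> / kappa <= gr d (L i)) ->
  (forall i, (1 <= i <= n - 1)%nat -> eps <= rho2 d (L i) (L (S i))) ->
  exp (- (11 * INR n * kappa / eps ^ 2))
    <= rho d L n / prodR (n - 1) (fun k => rho2 d (L (S k)) (L (S (S k))))
  /\ rho d L n / prodR (n - 1) (fun k => rho2 d (L (S k)) (L (S (S k))))
    <= exp (11 * INR n * kappa / eps ^ 2).
Proof.
  intros Hd Hn He0 He1 Hk0 Hk1 Hinv Hgr Hrho.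
  assert (Hdec : forall i, (1 <= i <= n)%nat -> exists sg u v, 0 < sg /\ nsq d u = 1 /\ nsq d v = 1 /\
   (forall x, nsq d (fun j => applyM d (L i) x j - sg * ip d v x * u j) <= (kappa * sg)^2 * nsq d x) /\
   (forall x, nsq d (applyM d (L i) x) <= sg ^ 2 * nsq d x) /\ opnorm d (L i) = sg).
  { intros i Hi.
    assert (Hex : exists s, exists U V, is_svd d (L i) U s V).
    { destruct (svd_exists ballmax d (L i)) as [U [s [V H]]]. exists s, U, V. exact H. }
    pose proof (epsilon_spec (inhabits (fun _ : nat => 0)) (fun s => exists U V, is_svd d (L i) U s V) Hex) as Hs.
    change (epsilon (inhabits (fun _ : nat => 0)) (fun s => exists U V, is_svd d (L i) U s V)) with (sing_vals d (L i)) in Hs.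
    destruct Hs as [U [V Hsvd]].
    apply (decomp_of_svd d (L i) kappa U (sing_vals d (L i)) V); auto. apply Hgr; auto. }
  destruct (choice3 _ n Hdec) as [sg [u [v Hall]]].
  destruct n as [|n']; [lia|].
  replace (S n' - 1)%nat with n' by lia.
  apply (final_bounds d n' eps kappa L sg u v); try lia; try lra.
  all: try (intro i; intros; match goal with Hi : (1 <= ?j <= S ?m)%nat |- _ =>
         destruct (Hall j Hi) as [H1 [H2 [H3 [H4 [H5 H6]]]]]; auto end).
  intros i Hi. apply Hrho. lia.
Qed.
End Main.

From HB Require Import structures.
From mathcomp Require all_boot all_order all_algebra all_classical all_reals topology normedtype derive Rstruct Rstruct_topology.

Module MC.
Import all_boot all_order all_algebra all_classical all_reals topology normedtype derive Rstruct Rstruct_topology.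
Import Order.TTheory GRing.Theory Num.Theory.
Import numFieldNormedType.Exports.
Local Open Scope classical_set_scope.

Section MaxEx.
Local Open Scope ring_scope.
Lemma sumR_cont n (F : nat -> 'rV[R]_n -> R) m :
  (forall k, continuous (F k)) -> continuous (fun r => sumR m (fun k => F k r)).
Proof.
move=> hF; elim: m => [|m IH] /=.
  exact: cst_continuous.
move=> x. exact: (@continuousD R R^o _ _ _ x (IH x) (hF m x)).
Qed.

Lemma mul_cont n (f g : 'rV[R]_n -> R) :
  continuous f -> continuous g -> continuous (fun r => Rmult (f r) (g r)).
Proof. move=> hf hg x. have := (@continuousM R _ f g x (hf x) (hg x)). exact. Qed.

Lemma sq_cont n (f : 'rV[R]_n -> R) : continuous f -> continuous (fun r => pow (f r) 2).
Proof.
move=> hf. apply: mul_cont => //. apply: mul_cont => //. exact: cst_continuous.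
Qed.

Lemma ball_max_rV n (q g : 'rV[R]_n -> R) :
  continuous q -> continuous g ->
  (forall r, Rle (g r) 1 -> forall i, Rle (-1) (r ord0 i) /\ Rle (r ord0 i) 1) ->
  forall r0, Rle (g r0) 1 ->
  exists c, Rle (g c) 1 /\ forall r, Rle (g r) 1 -> Rle (q r) (q c).
Proof.
move=> qc gc gbox r0 g0.
pose B := [set r | (g r <= 1)%R].
have Bcl : closed B.
  have := (proj1 (continuous_closedP g) gc [set x | x <= 1] (@closed_le _ 1)).
  by [].
have Kco : compact [set v : 'rV[R]_n | forall i, `[-1, 1]%classic (v ord0 i)].
  have := (@rV_compact R n (fun=> `[-1, 1]%classic) (fun=> @segment_compact _ _ _)). exact.
have Bco : compact B.
  apply: (subclosed_compact Bcl Kco) => r /= /RleP /gbox hr i.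
  have [h1 h2] := hr i.
  by rewrite /= in_itv /=; apply/andP; split; apply/RleP.
have B0 : B !=set0 by exists r0; apply/RleP.
have [c cB cmax] := EVT_max_rV B0 Bco (continuous_subspaceT qc).
exists c; split.
  by move: cB; rewrite inE => /RleP.
move=> r /RleP rB; apply/RleP; apply: cmax; rewrite inE; exact: rB.
Qed.

Definition emb m (r : 'rV[R]_m.+1) : Vec := fun j => r ord0 (inord j).
#[global] Arguments emb {m} r j.

Lemma emb_cont m j : continuous (fun r : 'rV[R]_m.+1 => emb r j).
Proof. exact: (@coord_continuous R 1 m.+1 ord0 (inord j)). Qed.

Definition rowv m (x : Vec) : 'rV[R]_m.+1 := \row_(i < m.+1) x (nat_of_ord i).
Lemma emb_rowv m (x : Vec) j : (j < m.+1)%coq_nat -> emb (rowv m x) j = x j.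
Proof. move=> Hj. rewrite /emb /rowv mxE inordK //. exact/ssrnat.ltP. Qed.
End MaxEx.

Lemma Q_ext d A x y : (forall j, (j < d)%coq_nat -> x j = y j) -> Qf d A x = Qf d A y.
Proof.
move=> H. rewrite /Qf. apply: nsq_ext => i Hi. exact: applyM_ext.
Qed.

Lemma ballmax_vec : forall d A, exists c, Rle (nsq d c) 1 /\ forall x, Rle (nsq d x) 1 -> Rle (Qf d A x) (Qf d A c).
Proof.
case=> [|m] A.
  exists (fun _ => R0). split; first by rewrite /nsq /=; lra.
  move=> x _. rewrite /Qf /nsq /=. lra.
pose q := fun r : 'rV[R]_m.+1 => Qf m.+1 A (emb r).
pose g := fun r : 'rV[R]_m.+1 => nsq m.+1 (emb r).
have qc : continuous q.
  rewrite /q /Qf /nsq. apply: sumR_cont => i. apply: sq_cont. rewrite /applyM.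
  apply: sumR_cont => j. apply: mul_cont; [exact: cst_continuous | exact: emb_cont].
have gc : continuous g.
  rewrite /g /nsq. apply: sumR_cont => i. apply: sq_cont. exact: emb_cont.
have gbox : forall r, Rle (g r) 1 -> forall i, Rle (-1) (r ord0 i) /\ Rle (r ord0 i) 1.
  move=> r Hr i.
  have Hi : Peano.lt (nat_of_ord i) m.+1 by apply/ssrnat.ltP; exact: ltn_ord.
  have H1 := @sumR_term_le m.+1 (fun k => pow (emb r k) 2) (nat_of_ord i) (fun j _ => pow2_ge_0 _) Hi.
  rewrite /emb inord_val in H1. rewrite /g /nsq /emb in Hr.
  split; nra.
have g0 : Rle (g (rowv m (fun _ => R0))) 1.
  rewrite /g /nsq. rewrite (@sumR_ext _ _ (fun _ => R0)).
    rewrite sumR_zero; lra.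
  move=> k Hk. rewrite emb_rowv //. simpl. ring.
have [c [Hc Hmax]] := @ball_max_rV _ q g qc gc gbox _ g0.
exists (emb c). split; first exact: Hc.
move=> x Hx.
pose r := rowv m x.
have Hr : forall j, (j < m.+1)%coq_nat -> emb r j = x j.
  move=> j Hj. exact: emb_rowv.
have := Hmax r. rewrite /q /g.
rewrite (Q_ext _ A _ _ Hr) (nsq_ext _ _ _ Hr). apply. exact: Hx.
Qed.
End MC.

Theorem theorem2p4 (d n : nat) (eps kappa : R) (L : nat -> Mat) :
  (2 <= d)%nat -> (36 <= n)%nat ->
  0 < eps -> eps <= 1 / 5 ->
  0 < kappa -> kappa <= 1 / 6 * eps ^ 2 ->
  (forall i, (1 <= i <= n)%nat -> invertible d (L i)) ->
  (forall i, (1 <= i <= n)%nat -> / kappa <= gr d (L i)) ->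
  (forall i, (1 <= i <= n - 1)%nat -> eps <= rho2 d (L i) (L (S i))) ->
  exp (- (11 * INR n * kappa / eps ^ 2))
    <= rho d L n / prodR (n - 1) (fun k => rho2 d (L (S k)) (L (S (S k))))
  /\ rho d L n / prodR (n - 1) (fun k => rho2 d (L (S k)) (L (S (S k))))
    <= exp (11 * INR n * kappa / eps ^ 2).
Proof. exact (main_from_ballmax MC.ballmax_vec d n eps kappa L). Qed.
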